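(* Assume each $f_m^j$ is $L$-smooth. In the setting described in the context, for every meta-epoch $t$, round $r\in\{0,\dots,R-1\}$, client $m\in S_t^{\lambda_r}$ and $j\in\{0,\dots,N-1\}$: $$\sigma^2_{m,\mathrm{DS}}(t,r,j)\le L\Big(\frac{MN^2}{2C^2}+2N^2\Big)\tilde\sigma_\star^2+\frac{LN}{2}\sigma_\star^2.$$ Moreover, for every $m$ and $r$, $$\sigma^2_{m,\mathrm{CS}}(r)\le\frac{LM}{2C^2}\tilde\sigma_\star^2.$$
   Context: Setting. There are $M$ clients, each holding $N$ data points. For $m\in[M]$ and $j\in\{0,\dots,N-1\}$, $f_m^j:\mathbb{R}^d\to\mathbb{R}$ is differentiable. Define $f_m=\frac1N\sum_j f_m^j$ and $f=\frac1M\sum_m f_m$, and let $x_\star$ be a minimizer of $f$. A function is $L$-smooth if its gradient is $L$-Lipschitz. The Bregman divergence is $D_h(x,y)=h(x)-h(y)-\langle\nabla h(y),x-y\rangle$. Define $\tilde\sigma_\star^2=\frac1M\sum_m\|\nabla f_m(x_\star)\|^2$ and $\sigma_\star^2=\frac1{MN}\sum_{m,j}\|\nabla f_m^j(x_\star)\|^2$. Let $\gamma,\eta>0$ and let $C$ be a cohort size with $M=CR$. Random sampling. In meta-epoch $t$, the clients are partitioned uniformly at random into $R$ disjoint cohorts of size $C$, taken in a uniformly random order $S_t^{\lambda_0},\dots,S_t^{\lambda_{R-1}}$. Each client $m$ has an independent uniformly random permutation $\pi_m=(\pi_m^0,\dots,\pi_m^{N-1})$ of its data indices. Data-level star sequence.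 Set $x^0_\star=x_\star$. For $m\in S_t^{\lambda_r}$, set $x^{r,0}_{m,\star}=x^r_\star$, $x^{r,j+1}_{m,\star}=x^{r,j}_{m,\star}-\gamma\nabla f_m^{\pi_m^j}(x_\star)$, and $x^{r+1}_\star=\frac1C\sum_{m\in S_t^{\lambda_r}}x^{r,N}_{m,\star}$. Define $\sigma^2_{m,\mathrm{DS}}(t,r,j)=\frac1{\gamma^2}\mathbb{E}[D_{f_m^{\pi_m^j}}(x^{r,j}_{m,\star},x_\star)]$. Client-level star sequence. Set $y^0_\star=x_\star$ and $y^{r+1}_\star=y^r_\star-\eta\frac1C\sum_{m\in S_t^{\lambda_r}}\nabla f_m(x_\star)$. Define $\sigma^2_{m,\mathrm{CS}}(r)=\frac1{\eta^2}\mathbb{E}[D_{f_m}(y^r_\star,x_\star)]$. *)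

(* Defs.v *)
From HB Require Import structures.
From mathcomp Require Import all_boot all_order all_algebra all_fingroup.
From mathcomp Require Import all_classical all_reals all_analysis.
Set Implicit Arguments. Unset Strict Implicit. Unset Printing Implicit Defensive.
Import Order.TTheory GRing.Theory Num.Theory.
Import numFieldNormedType.Exports.
Local Open Scope ring_scope.

Section Defs.
Variables (K : realType) (d : nat).
Local Notation vec := 'rV[K]_d.

Definition dotv (u v : vec) : K := \sum_(i < d) u 0 i * v 0 i.
Definition sqnorm (v : vec) : K := dotv v v.
Definition enorm (v : vec) : K := Num.sqrt (sqnorm v).

Definition grad (h : vec -> K) (x : vec) : vec :=
  \row_(i < d) ('d h x) (delta_mx 0 i).

Definition Lsmooth (L : K) (h : vec -> K) : Prop :=
  (forall x, differentiable h x) /\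
  (forall x y, enorm (grad h x - grad h y) <= L * enorm (x - y)).

Definition bregman (h : vec -> K) (x y : vec) : K :=
  h x - h y - dotv (grad h y) (x - y).

Definition Eunif (T : finType) (X : T -> K) : K :=
  (#|T|%:R)^-1 * \sum_(w : T) X w.

End Defs.

Lemma slot_lt (C R : nat) (r : 'I_R) (s : 'I_C) : (r * C + s < C * R)%N.
Proof.
have hr := ltn_ord r; have hs := ltn_ord s.
have h1 : (r * C + s < r * C + C)%N by rewrite ltn_add2l.
apply: (leq_trans h1); rewrite -mulSnr mulnC leq_mul2l; apply/orP; right; exact: hr.
Qed.

(* slot s of cohort r in the flattened enumeration 0..CR-1 *)
Definition slot (C R : nat) (r : 'I_R) (s : 'I_C) : 'I_(C * R) :=
  Ordinal (slot_lt r s).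

Section Sampling.
Variables (K : realType) (d N C R : nat).
Local Notation vec := 'rV[K]_d.
Local Notation M := (C * R)%N.

(* Sample space of one meta-epoch:
   - a uniformly random permutation [sigma] of the M clients; cohort in
     round r (i.e. S_t^{lambda_r}) is {sigma (r*C + s) | s < C}.  The induced
     law of the ordered partition (S^{lambda_0},...,S^{lambda_{R-1}}) is the
     uniform law on partitions into R cohorts of size C in uniform order;
   - independent uniformly random data permutations pi_m, one per client. *)
Definition Omega : finType :=
  prod {perm 'I_M} {ffun 'I_M -> {perm 'I_N}}.

Definition cohort (w : Omega) (r : 'I_R) (s : 'I_C) : 'I_M := w.1 (slot r s).
Definition dperm (w : Omega) (m : 'I_M) : {perm 'I_N} := w.2 m.

Variables (F : 'I_M -> 'I_N -> vec -> K) (xs : vec) (gamma eta : K).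

Definition fm (m : 'I_M) : vec -> K := fun x => (N%:R)^-1 * \sum_(j < N) F m j x.
Definition ftot : vec -> K := fun x => (M%:R)^-1 * \sum_(m < M) fm m x.

(* data-level star sequence: x^{r,j}_{m,*} (closed form of the recursion
   x^{r,j+1} = x^{r,j} - gamma grad f_m^{pi_m^j}(x_* ), x^{r,0} = x^r) *)
Definition x_inner (w : Omega) (xr : vec) (m : 'I_M) (j : nat) : vec :=
  xr - gamma *: \sum_(k < N | (k < j)%N) grad (F m (dperm w m k)) xs.

Fixpoint x_round (w : Omega) (r : nat) : vec :=
  match r with
  | 0 => xs
  | r'.+1 =>
      let xr := x_round w r' in
      match (insub r' : option 'I_R) with
      | Some o => (C%:R)^-1 *: \sum_(s < C) x_inner w xr (cohort w o s) N
      | None => xr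
      end
  end.

Fixpoint y_round (w : Omega) (r : nat) : vec :=
  match r with
  | 0 => xs
  | r'.+1 =>
      let yr := y_round w r' in
      match (insub r' : option 'I_R) with
      | Some o => yr - eta *: ((C%:R)^-1 *: \sum_(s < C) grad (fm (cohort w o s)) xs)
      | None => yr
      end
  end.

(* sigma^2_{m,DS}(t,r,j) for the client m occupying slot s of cohort
   S_t^{lambda_r} *)
Definition sigmaDS (r : 'I_R) (s : 'I_C) (j : 'I_N) : K :=
  (gamma ^+ 2)^-1 *
  Eunif (fun w : Omega =>
     let m := cohort w r s in
     bregman (F m (dperm w m j)) (x_inner w (x_round w r) m j) xs).

Definition sigmaCS (m : 'I_M) (r : nat) : K :=
  (eta ^+ 2)^-1 * Eunif (fun w : Omega => bregman (fm m) (y_round w r) xs).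

Definition sigt2 : K := (M%:R)^-1 * \sum_(m < M) sqnorm (grad (fm m) xs).
Definition sigs2 : K :=
  ((M * N)%:R)^-1 * \sum_(m < M) \sum_(j < N) sqnorm (grad (F m j) xs).

End Sampling.

(* Main.v *)
Require Import Defs.
From HB Require Import structures.
From mathcomp Require Import all_boot all_order all_algebra all_fingroup.
From mathcomp Require Import all_classical all_reals all_analysis.
From mathcomp Require Import ring lra zify.
Import Order.TTheory GRing.Theory Num.Theory.
Import numFieldNormedType.Exports.
Set Implicit Arguments. Unset Strict Implicit.
Local Open Scope classical_set_scope.
Local Open Scope ring_scope.

Section Dot.
Variables (K : realType) (d : nat).
Local Notation vec := 'rV[K]_d.
Implicit Types p q u v : vec.

Lemma dotvC p q : dotv p q = dotv q p.
Proof. by apply: eq_bigr => i _; rewrite mulrC. Qed.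
Lemma dotvDl p q u : dotv (p + q) u = dotv p u + dotv q u.
Proof. by rewrite /dotv -big_split; apply: eq_bigr => i _; rewrite mxE mulrDl. Qed.
Lemma dotvZl a p u : dotv (a *: p) u = a * dotv p u.
Proof. by rewrite /dotv mulr_sumr; apply: eq_bigr => i _; rewrite mxE mulrA. Qed.
Lemma dotvNl p u : dotv (- p) u = - dotv p u.
Proof. by rewrite -scaleN1r dotvZl mulN1r. Qed.
Lemma dotvBl p q u : dotv (p - q) u = dotv p u - dotv q u.
Proof. by rewrite dotvDl dotvNl. Qed.
Lemma dotvDr p q u : dotv u (p + q) = dotv u p + dotv u q.
Proof. by rewrite !(dotvC u) dotvDl. Qed.
Lemma dotvZr a p u : dotv u (a *: p) = a * dotv u p.
Proof. by rewrite !(dotvC u) dotvZl. Qed.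
Lemma dotvBr p q u : dotv u (p - q) = dotv u p - dotv u q.
Proof. by rewrite !(dotvC u) dotvBl. Qed.
Lemma dotv_suml (I : Type) (r : seq I) (P : pred I) (F : I -> vec) u :
  dotv (\sum_(i <- r | P i) F i) u = \sum_(i <- r | P i) dotv (F i) u.
Proof.
elim/big_rec2: _ => [|i y1 y2 _ <-]; last by rewrite dotvDl.
by rewrite /dotv big1 // => i _; rewrite mxE mul0r.
Qed.
Lemma dotv_sumr (I : Type) (r : seq I) (P : pred I) (F : I -> vec) u :
  dotv u (\sum_(i <- r | P i) F i) = \sum_(i <- r | P i) dotv u (F i).
Proof. by rewrite dotvC dotv_suml; apply: eq_bigr => i _; rewrite dotvC. Qed.

Lemma sqnorm_ge0 p : 0 <= sqnorm p.
Proof. by apply: sumr_ge0 => i _; rewrite -expr2 sqr_ge0. Qed.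

Lemma sqnorm0_eq p : sqnorm p = 0 -> forall u, dotv p u = 0.
Proof.
move=> h u; rewrite /dotv big1 // => i _.
have /psumr_eq0P h2 := h.
have /eqP : p 0 i * p 0 i = 0 by apply: h2 => // j _; rewrite -expr2 sqr_ge0.
by rewrite mulf_eq0 orbb => /eqP ->; rewrite mul0r.
Qed.

Lemma sqnormBZ p u a :
  sqnorm (p - a *: u) = sqnorm p - 2 * a * dotv p u + a ^+ 2 * sqnorm u.
Proof.
rewrite /sqnorm dotvBl !dotvBr !dotvZl !dotvZr (dotvC u p); ring.
Qed.

Lemma cauchy_schwarz p u : dotv p u ^+ 2 <= sqnorm p * sqnorm u.
Proof.
have hU := sqnorm_ge0 u; have hP := sqnorm_ge0 p.
have [U0|Upos] := eqVneq (sqnorm u) 0.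
  by rewrite dotvC sqnorm0_eq // expr0n /= U0 mulr0.
have Ug : 0 < sqnorm u by rewrite lt_def Upos hU.
have := sqnorm_ge0 (p - (dotv p u / sqnorm u) *: u).
rewrite sqnormBZ => h.
have e : dotv p u / sqnorm u * sqnorm u = dotv p u by rewrite divfK.
rewrite -subr_ge0.
have -> : sqnorm p * sqnorm u - dotv p u ^+ 2 =
   (sqnorm p - 2 * (dotv p u / sqnorm u) * dotv p u +
      (dotv p u / sqnorm u) ^+ 2 * sqnorm u) * sqnorm u.
  by field.
by apply: mulr_ge0.
Qed.
Lemma diff_dotv (h : vec -> K) z u : 'd h z u = dotv (grad h z) u.
Proof.
rewrite /dotv {1}(row_sum_delta u) linear_sum; apply: eq_bigr => i _.
by rewrite linearZ /= mxE mulrC.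
Qed.

Lemma line_derive (h : vec -> K) (y u : vec) (t : K) :
  (forall x, differentiable h x) ->
  is_derive t 1 (fun s : K => h (s *: u + y)) (dotv (grad h (t *: u + y)) u).
Proof.
move=> dh.
pose l : K -> vec := ( *:%R^~ u) + cst y.
have il : is_diff t l (( *:%R^~ u) + 0) by exact: is_diffD.
have dl : differentiable l t by exact: ex_diff.
have -> : (fun s : K => h (s *: u + y)) = h \o l by [].
apply: DeriveDef.
  by apply: diff_derivable; apply: differentiable_comp.
rewrite deriveE; last by apply: differentiable_comp.
rewrite diff_comp // /= -diff_dotv; congr ('d h _ _).
by rewrite diff_val /= addr0 scale1r.
Qed.

Lemma enormZ c u : 0 <= c -> enorm (c *: u) = c * enorm u.
Proof.
move=> c0; rewrite /enorm /sqnorm dotvZl dotvZr mulrA -expr2 sqrtrM ?sqr_ge0 //.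
by rewrite sqrtr_sqr ger0_norm.
Qed.

Lemma dot_le_enorm p u : dotv p u <= enorm p * enorm u.
Proof.
rewrite /enorm -sqrtrM ?sqnorm_ge0 //.
apply: (le_trans (ler_norm _)); rewrite -sqrtr_sqr ler_sqrt.
  exact: cauchy_schwarz.
by apply: mulr_ge0; apply: sqnorm_ge0.
Qed.

Lemma sqnorm_enorm u : sqnorm u = enorm u ^+ 2.
Proof. by rewrite /enorm sqr_sqrtr // sqnorm_ge0. Qed.

Lemma bregman_le (h : vec -> K) L x y :
  Lsmooth L h -> bregman h x y <= L / 2 * sqnorm (x - y).
Proof.
move=> [dh hL].
set u := x - y; set D0 := dotv (grad h y) u; set U := sqnorm u.
pose psi : K -> K := (fun s : K => h (s *: u + y)) - (D0 \*: (@id K))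
   - ((L / 2 * U) \*: ((@id K) * (@id K))).
pose dpsi (c : K) : K := dotv (grad h (c *: u + y)) u - D0 *: 1
   - (L / 2 * U) *: (c *: 1 + c *: 1).
have H (c : K) : is_derive c (1 : K) psi (dpsi c).
  rewrite /psi /dpsi.
  apply: is_deriveB; first apply: is_deriveB.
  exact: line_derive.
have cont : {within `[0, 1], continuous psi}.
  apply: derivable_within_continuous => c _; exact: (@ex_derive _ _ _ _ _ _ _ (H c)).
have [c c01 e] := MVT_segment ler01 (fun c _ => H c) cont.
have c0 : 0 <= c by move: c01; rewrite in_itv /= => /andP [].
have hd : dpsi c <= 0.
  rewrite /dpsi.
  set p := grad h (c *: u + y) - grad h y.
  have hp := hL (c *: u + y) y.
  rewrite addrK enormZ // -/p in hp.
  have h1 := dot_le_enorm p u.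
  have h2 : enorm p * enorm u <= L * c * U.
    rewrite /U sqnorm_enorm expr2 mulrA; apply: ler_wpM2r; first exact: sqrtr_ge0.
    by rewrite -mulrA.
  have : dotv p u = dotv (grad h (c *: u + y)) u - D0 by rewrite dotvBl.
  rewrite /GRing.scale /=.
  lra.
have p1 : psi 1 = h (1 *: u + y) - D0 * 1 - (L / 2 * U) * (1 * 1) := erefl.
have p0 : psi 0 = h (0 *: u + y) - D0 * 0 - (L / 2 * U) * (0 * 0) := erefl.
rewrite p1 p0 scale1r scale0r add0r /u subrK -/u !mulr0 !mulr1 !subr0 in e.
rewrite /bregman -/u -/D0.
rewrite /bregman.
lra.
Qed.
End Dot.

Section PermVar.
Variables (R : realFieldType) (n : nat).
Local Notation PT := {perm 'I_n}.
Local Notation cP := (#|{: PT}|%:R : R).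

Lemma perm_shift (F : PT -> R) (t : PT) :
  \sum_(p : PT) F p = \sum_(p : PT) F (t * p)%g.
Proof. exact: (reindex_inj (mulgI t)). Qed.

Lemma perm_unif (h : 'I_n -> R) i :
  n%:R * \sum_(p : PT) h (p i) = cP * \sum_k h k.
Proof.
have e i' : \sum_(p : PT) h (p i) = \sum_(p : PT) h (p i').
  rewrite (perm_shift _ (tperm i i')); apply: eq_bigr => p _.
  by rewrite permM tpermL.
rewrite mulr_natl -[n in _ *+ n]card_ord -sumr_const.
rewrite (eq_bigr (fun i' => \sum_(p : PT) h (p i'))); last by move=> i' _; exact: e.
rewrite exchange_big /= mulr_natl -sumr_const.
apply: eq_bigr => p _; by rewrite [RHS](reindex_inj (@perm_inj _ p)).
Qed.

Variable x : 'I_n -> R.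
Definition cc (k k' : 'I_n) := \sum_(p : PT) x (p k) * x (p k').
Definition sA := \sum_k x k ^+ 2.
Definition sB := (\sum_k x k) ^+ 2.

Lemma cc_sym k k1 k2 : k1 != k -> k2 != k -> cc k k1 = cc k k2.
Proof.
move=> h1 h2; rewrite /cc (perm_shift _ (tperm k1 k2)); apply: eq_bigr => p _.
by rewrite !permM tpermL tpermD // eq_sym.
Qed.

Lemma cc_diag k : n%:R * cc k k = cP * sA.
Proof.
rewrite /cc /sA -(perm_unif _ k); congr (_ * _); apply: eq_bigr => p _; by rewrite expr2.
Qed.

Lemma cc_off k k' : k' != k -> n%:R * (n%:R - 1) * cc k k' = cP * (sB - sA).
Proof.
move=> hk.
have e1 : \sum_k'' cc k k'' = \sum_(p : PT) x (p k) * \sum_k x k.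
  rewrite /cc exchange_big /=; apply: eq_bigr => p _.
  rewrite -mulr_sumr; congr (_ * _); exact: (esym (reindex_inj (@perm_inj _ p))).
have e2 : n%:R * \sum_k'' cc k k'' = cP * sB.
  rewrite e1 -mulr_suml mulrA (perm_unif _ k) /sB -mulrA expr2 //.
have e3 : \sum_k'' cc k k'' = cc k k + (n%:R - 1) * cc k k'.
  rewrite (bigD1 k) //=; congr (_ + _).
  rewrite (eq_bigr (fun _ => cc k k')); last by move=> j hj; apply: cc_sym.
  rewrite sumr_const.
  have hc : #|(fun i : 'I_n => i != k)| = n.-1.
    by rewrite -[n in RHS]card_ord -(cardC1 k).
  rewrite hc -[LHS]mulr_natl; congr (_ * _).
  case: n k {hk e1 e2 hc} => [[]//|m] _ /=.
  by rewrite mulrSr addrK.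
have := cc_diag k.
rewrite e3 in e2.
move: e2; set a := cc k k; set b := cc k k'.
move=> e2 e4.
have -> : n%:R * (n%:R - 1) * b = n%:R * (a + (n%:R - 1) * b) - n%:R * a by ring.
rewrite e2 e4 mulrBr //.
Qed.

Lemma perm_var (P : pred 'I_n) :
  n%:R * (n%:R - 1) * \sum_(p : PT) (\sum_(k | P k) x (p k)) ^+ 2 =
  cP * (#|P|%:R * (n%:R - #|P|%:R) * sA + #|P|%:R * (#|P|%:R - 1) * sB).
Proof.
have e1 : \sum_(p : PT) (\sum_(k | P k) x (p k)) ^+ 2 =
    \sum_(k | P k) \sum_(k' | P k') cc k k'.
  rewrite /cc; under eq_bigr => p _ do rewrite expr2 mulr_suml.
  rewrite exchange_big /=; apply: eq_bigr => k _.
  under eq_bigr => p _ do rewrite mulr_sumr.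
  by rewrite exchange_big.
rewrite e1 mulr_sumr.
have e2 k : P k -> n%:R * (n%:R - 1) * \sum_(k' | P k') cc k k' =
   cP * ((n%:R - 1) * sA + (#|P|%:R - 1) * (sB - sA)).
  move=> Pk; rewrite (bigD1 k) //= mulrDr.
  have -> : n%:R * (n%:R - 1) * cc k k = (n%:R - 1) * (cP * sA).
    by rewrite -(cc_diag k); ring.
  have -> : n%:R * (n%:R - 1) * \sum_(k' | P k' && (k' != k)) cc k k' =
      \sum_(k' | P k' && (k' != k)) cP * (sB - sA).
    by rewrite mulr_sumr; apply: eq_bigr => j /andP [_ hj]; rewrite cc_off.
  rewrite sumr_const.
  have hc : #|(fun i : 'I_n => P i && (i != k))| = #|P|.-1.
    rewrite (cardD1 k P) [k \in P]Pk add1n /=.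
    by apply: eq_card => i; rewrite !inE andbC.
  rewrite hc -mulr_natl.
  have : (0 < #|P|)%N by apply/card_gt0P; exists k.
  case: #|P| => // m _ /=.
  rewrite mulrSr addrK; ring.
rewrite (eq_bigr _ e2) sumr_const -mulr_natl; ring.
Qed.
End PermVar.

Arguments sA {R n} x.
Arguments sB {R n} x.
Arguments perm_var {R n} x P.

Lemma nat_ineq1 p n : (p <= n)%N -> (2 * (p * (n - p)) <= n * (n - 1))%N.
Proof.
move=> /subnKC <-; rewrite addKn; case: p => [|p]; case: (n - _)%N => [|q]; nia.
Qed.
Lemma nat_ineq2 p n : (p <= n)%N -> (p * (p - 1) <= n * (n - 1))%N.
Proof. move=> h; nia. Qed.

Lemma perm_bound (R : realFieldType) n (x : 'I_n -> R) (P : pred 'I_n) :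
  \sum_(p : {perm 'I_n}) (\sum_(k | P k) x (p k)) ^+ 2 <=
  #|{: {perm 'I_n}}|%:R * (sA x / 2 + sB x).
Proof.
have hA : 0 <= sA x by apply: sumr_ge0 => i _; exact: sqr_ge0.
have hB : 0 <= sB x by exact: sqr_ge0.
case: n x P hA hB => [|[|n]] x P hA hB.
- rewrite big1; first by apply: mulr_ge0 => //; apply: addr_ge0 => //; apply: divr_ge0.
  by move=> p _; rewrite big1 ?expr0n // => -[].
- have -> : \sum_(p : {perm 'I_1}) (\sum_(k | P k) x (p k)) ^+ 2 =
     \sum_(p : {perm 'I_1}) (if P ord0 then x ord0 else 0) ^+ 2.
    apply: eq_bigr => p _; rewrite big_mkcond big_ord1.
    by rewrite (ord1 (p ord0)).
  rewrite sumr_const -[X in X <= _]mulr_natl; apply: ler_wpM2l => //.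
  have -> : sB x = x ord0 ^+ 2 by rewrite /sB big_ord1.
  case: (P ord0).
    by rewrite lerDr; apply: divr_ge0.
  by rewrite expr0n /=; apply: addr_ge0 => //; [apply: divr_ge0 | exact: sqr_ge0].
- set m := n.+2.
  have hp : (#|P| <= m)%N by rewrite -[m in (_ <= m)%N]card_ord max_card.
  have h1 := nat_ineq1 hp; have h2 := nat_ineq2 hp.
  have hm : (0 : R) < m%:R * (m%:R - 1).
    by rewrite /m -natr1 addrK; apply: mulr_gt0; rewrite ?ltr0Sn // ltr_wpDr.
  rewrite -(ler_pM2l hm) perm_var [in X in _ <= X]mulrCA.
  apply: ler_wpM2l => //.
  rewrite -(ler_nat R) !natrM (natrB _ hp) (@natrB _ m 1) // in h1.
  have hp' : (#|P|%:R : R) <= m%:R by rewrite ler_nat.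
  have hm2 : (2 : R) <= m%:R by rewrite /m (ler_nat R 2).
  have ha0 : (0 : R) <= #|P|%:R by [].
  clear h2.
  set a := #|P|%:R in h1 hp' ha0 *; set b := m%:R in h1 hm hp' hm2 *.
  have i1 : a * (b - a) * sA x <= b * (b - 1) / 2 * sA x.
    by apply: ler_wpM2r => //; lra.
  have i2 : a * (a - 1) <= b * (b - 1).
    have : 0 <= (b - a) * (b + a - 1) by apply: mulr_ge0; lra.
    nra.
  have i3 : a * (a - 1) * sB x <= b * (b - 1) * sB x by apply: ler_wpM2r.
  have -> : b * (b - 1) * (sA x / 2 + sB x) = b * (b - 1) / 2 * sA x + b * (b - 1) * sB x by field.
  lra.
Qed.

Section Vec.
Variables (K : realType) (d : nat).
Local Notation vec := 'rV[K]_d.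

Lemma sqnorm_sum_coord (u : vec) : sqnorm u = \sum_(c < d) u 0 c ^+ 2.
Proof. by apply: eq_bigr => c _; rewrite expr2. Qed.

Lemma perm_bound_vec n (v : 'I_n -> vec) (P : pred 'I_n) :
  \sum_(p : {perm 'I_n}) sqnorm (\sum_(k | P k) v (p k)) <=
  #|{: {perm 'I_n}}|%:R * ((\sum_k sqnorm (v k)) / 2 + sqnorm (\sum_k v k)).
Proof.
under eq_bigr => p _ do rewrite sqnorm_sum_coord.
rewrite exchange_big /=.
have -> : (\sum_k sqnorm (v k)) / 2 + sqnorm (\sum_k v k) =
   \sum_(c < d) (sA (fun k => v k 0 c) / 2 + sB (fun k => v k 0 c)).
  rewrite big_split /= -mulr_suml; congr (_ / 2 + _).
    rewrite /sA exchange_big /=; apply: eq_bigr => c _; apply: eq_bigr => k _; by rewrite expr2.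
  rewrite sqnorm_sum_coord; apply: eq_bigr => c _; by rewrite /sB summxE.
rewrite mulr_sumr; apply: ler_sum => c _.
have := perm_bound (fun k => v k 0 c) P.
by under eq_bigr => p _ do rewrite summxE.
Qed.

Lemma sqnormN (u : vec) : sqnorm (- u) = sqnorm u.
Proof. by rewrite /sqnorm dotvNl dotvC dotvNl opprK. Qed.

Lemma sqnormZ a (u : vec) : sqnorm (a *: u) = a ^+ 2 * sqnorm u.
Proof. by rewrite /sqnorm dotvZl dotvZr mulrA expr2. Qed.

Lemma sqnormD_le (u v : vec) : sqnorm (u + v) <= 2 * sqnorm u + 2 * sqnorm v.
Proof.
have := sqnorm_ge0 (u - v).
rewrite /sqnorm !dotvBl !dotvBr !dotvDl !dotvDr (dotvC v u).
lra.
Qed.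
End Vec.

Section Grad.
Variables (K : realType) (d : nat).
Local Notation vec := 'rV[K]_d.

Lemma diff_sum_app n (G : 'I_n -> vec -> K) z :
  (forall j, differentiable (G j) z) ->
  differentiable (\sum_j G j) z /\
  forall v, 'd (\sum_j G j) z v = \sum_j 'd (G j) z v.
Proof.
move=> hG.
pose P (f df : vec -> K) := differentiable f z /\ 'd f z = df :> (vec -> K).
have : P (\sum_j G j) (\sum_j ('d (G j) z : vec -> K)).
  apply: (big_rec2 P).
    split; first exact: differentiable_cst.
    by rewrite diff_cst.
  move=> j y1 y2 _ [hd he]; split; first exact: differentiableD.
  by rewrite diffD // he.
move=> [hd he]; split => // v; by rewrite he fct_sumE.
Qed.

Lemma grad_scale_sum n (G : 'I_n -> vec -> K) c z :
  (forall j, differentiable (G j) z) ->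
  differentiable (fun x => c * \sum_j G j x) z /\
  grad (fun x => c * \sum_j G j x) z = c *: \sum_j grad (G j) z.
Proof.
move=> hG; have [hd he] := diff_sum_app hG.
have -> : (fun x => c * \sum_j G j x) = c *: (\sum_j G j).
  by apply/funext => x /=; rewrite fct_sumE.
split; first exact: differentiableZ.
apply/rowP => i; rewrite !mxE diffZ //= he summxE.
by congr (_ * _); apply: eq_bigr => j _; rewrite mxE.
Qed.

Lemma bregman_scale_sum n (G : 'I_n -> vec -> K) c x z :
  (forall j, differentiable (G j) z) ->
  bregman (fun x => c * \sum_j G j x) x z = c * \sum_j bregman (G j) x z.
Proof.
move=> hG; have [_ he] := grad_scale_sum c hG.
rewrite /bregman he dotvZl dotv_suml !mulr_sumr -!sumrB.
by apply: eq_bigr => j _; rewrite !mulrBr.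
Qed.
End Grad.

Lemma ffun_marg (K : numDomainType) (I : finType) (G : finGroupType) (h : G -> K) (m0 : I) :
  #|{: G}|%:R * \sum_(f : {ffun I -> G}) h (f m0) =
  #|{: {ffun I -> G}}|%:R * \sum_(g : G) h g.
Proof.
have e (t : G) : \sum_(f : {ffun I -> G}) h (f m0) = \sum_(f : {ffun I -> G}) h (t * f m0)%g.
  pose u (f : {ffun I -> G}) := [ffun m => if m == m0 then (t * f m)%g else f m].
  have ui : injective u.
    move=> f1 f2 e12; apply/ffunP => m; have := congr1 (fun g : {ffun I -> G} => g m) e12.
    by rewrite /u !ffunE; case: (m == m0) => //; apply: mulgI.
  rewrite (reindex_inj ui) /=; apply: eq_bigr => f _; by rewrite /u ffunE eqxx.
have -> : #|{: G}|%:R * \sum_(f : {ffun I -> G}) h (f m0) =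
    \sum_(t : G) \sum_(f : {ffun I -> G}) h (t * f m0)%g.
  by rewrite -(eq_bigr _ (fun t _ => e t)) sumr_const mulr_natl.
rewrite exchange_big /= mulr_natl -sumr_const.
apply: eq_bigr => f _; exact: (esym (reindex_inj (mulIg (f m0)))).
Qed.

Lemma split_sum (V : nmodType) (C R : nat) (h : 'I_(C * R) -> V) (o : 'I_R) :
  \sum_(i : 'I_(C * R) | (i < o.+1 * C)%N) h i =
  \sum_(i : 'I_(C * R) | (i < o * C)%N) h i + \sum_(s < C) h (slot o s).
Proof.
pose H (i : nat) : V := oapp h 0 (insub i).
have HE (i : 'I_(C * R)) : H i = h i by rewrite /H valK.
have hle p : (p <= C * R)%N ->
    \sum_(i : 'I_(C * R) | (i < p)%N) h i = \sum_(0 <= i < p) H i.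
  move=> hp; rewrite big_mkord (@big_ord_widen_cond _ _ _ p (C * R) xpredT H hp).
  by apply: eq_bigr => i _; rewrite HE.
have ho : (o.+1 * C <= C * R)%N by rewrite mulnC leq_mul2l ltn_ord orbT.
have ho' : (o * C <= C * R)%N by apply: leq_trans ho; rewrite leq_mul2r leqnSn orbT.
have e1 : (o.+1 * C = o * C + C)%N by rewrite mulSn addnC.
rewrite (hle _ ho) (hle _ ho') e1 (big_cat_nat (leq0n (o * C)) (leq_addr C (o * C))) /=; congr (_ + _).
rewrite -{1}[(o * C)%N]add0n big_addn addKn big_mkord.
by apply: eq_bigr => s _; rewrite addnC -HE.
Qed.

Section Main.
Variables (K : realType) (d N C R : nat).
Local Notation vec := 'rV[K]_d.
Local Notation M := (C * R)%N.
Variables (F : 'I_M -> 'I_N -> vec -> K) (xs : vec) (gamma eta L : K).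
Hypothesis hsmooth : forall m j, Lsmooth L (F m j).

Let hdiff m j z : differentiable (F m j) z.
Proof. by have [h _] := hsmooth m j. Qed.

Definition gm (m : 'I_M) : vec := grad (fm F m) xs.
Definition Spre (p : {perm 'I_M}) (r : nat) : vec :=
  \sum_(i : 'I_M | (i < r * C)%N) gm (p i).

Lemma gm_eq m : gm m = N%:R^-1 *: \sum_(k < N) grad (F m k) xs.
Proof. by rewrite /gm /fm; have [_ ->] := grad_scale_sum (N%:R^-1) (fun j => hdiff m j xs). Qed.

Lemma sumF m : \sum_(k < N) grad (F m k) xs = N%:R *: gm m.
Proof.
rewrite gm_eq scalerA; case: N F m => [|n] F' m.
  by rewrite big_ord0 scaler0.
by rewrite mulfV ?scale1r // pnatr_eq0.
Qed.

Lemma sum_perm_F m (p : {perm 'I_N}) :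
  \sum_(k < N | (k < N)%N) grad (F m (p k)) xs = N%:R *: gm m.
Proof.
rewrite -sumF.
have -> : \sum_(k < N | (k < N)%N) grad (F m (p k)) xs = \sum_(k < N) grad (F m (p k)) xs.
  by apply: eq_bigl => k; rewrite ltn_ord.
exact: (esym (reindex_inj (@perm_inj _ p))).
Qed.
Lemma Spre0 p : Spre p 0 = 0.
Proof. by rewrite /Spre big_pred0. Qed.

Lemma SpreS p (o : 'I_R) :
  Spre p o.+1 = Spre p o + \sum_(s < C) gm (p (slot o s)).
Proof. by rewrite /Spre split_sum. Qed.

Lemma x_round_eq w r : (0 < C)%N -> (r <= R)%N ->
  x_round F xs gamma w r = xs - (gamma * N%:R / C%:R) *: Spre w.1 r.
Proof.
move=> hC; elim: r => [|r IH] hr /=; first by rewrite Spre0 scaler0 subr0.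
case: insubP => [i0 _ ho|]; last by rewrite hr.
rewrite IH ?(ltnW hr) // -ho SpreS.
under eq_bigr => s _ do rewrite /x_inner sum_perm_F scalerA.
rewrite sumrB sumr_const card_ord -scaler_sumr -[(xs - _) *+ C]scaler_nat scalerBr scalerA.
rewrite mulVf; last by rewrite pnatr_eq0 -lt0n.
rewrite scale1r scalerA scalerDr opprD addrA [C%:R^-1 * _]mulrC.
by [].
Qed.

Lemma y_round_eq w r : (r <= R)%N ->
  y_round F xs eta w r = xs - (eta / C%:R) *: Spre w.1 r.
Proof.
elim: r => [|r IH] hr /=; first by rewrite Spre0 scaler0 subr0.
case: insubP => [i0 _ ho|]; last by rewrite hr.
rewrite IH ?(ltnW hr) // -ho SpreS.
by rewrite scalerA scalerDr opprD addrA.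
Qed.

Lemma L_or_d0 : (0 < M)%N -> (0 < N)%N -> 0 <= L \/ (forall v : vec, sqnorm v = 0).
Proof.
move=> hM hN.
case: d F xs hsmooth hdiff => [|d'] F' xs' hs hd.
  by right => v; rewrite /sqnorm /dotv big_ord0.
left.
have [_ hL] := hs (Ordinal hM) (Ordinal hN).
have := hL (const_mx 1) 0.
rewrite subr0.
have -> : enorm (const_mx 1 : 'rV[K]_d'.+1) = Num.sqrt (d'.+1)%:R.
  rewrite /enorm /sqnorm /dotv; congr Num.sqrt.
  under eq_bigr => i _ do rewrite mxE mul1r.
  by rewrite sumr_const card_ord.
have hp : 0 < Num.sqrt (d'.+1)%:R :> K by rewrite sqrtr_gt0 ltr0Sn.
have hn : 0 <= enorm (grad (F' (Ordinal hM) (Ordinal hN)) (const_mx 1) - grad (F' (Ordinal hM) (Ordinal hN)) 0) by exact: sqrtr_ge0.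
move=> h; have := le_trans hn h.
by rewrite pmulr_lge0.
Qed.

Lemma sqnorm0 : sqnorm (0 : vec) = 0.
Proof. by rewrite /sqnorm /dotv big1 // => i _; rewrite mxE mul0r. Qed.

Hypothesis hmin : forall y, ftot F xs <= ftot F y.

Lemma gsum0 : sqnorm (\sum_(m < M) gm m) = 0.
Proof.
have dfm m z : differentiable (fm F m) z.
  by have [h _] := grad_scale_sum (N%:R^-1) (fun j => hdiff m j z).
have [dft hgt] := grad_scale_sum (M%:R^-1) (fun m => dfm m xs).
rewrite -/(ftot F) in dft hgt.
set v := grad (ftot F) xs.
have dall z : differentiable (ftot F) z.
  by have [h _] := grad_scale_sum (M%:R^-1) (fun m => dfm m z).
have hD (t : K) : is_derive t (1 : K) (fun s : K => ftot F (s *: v + xs)) (dotv (grad (ftot F) (t *: v + xs)) v).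
  exact: line_derive.
have h0 : is_derive (0 : K) 1 (fun s : K => ftot F (s *: v + xs)) 0.
  apply: (@derive1_at_min _ _ (-1) 1).
  - by apply: (le_trans (lerN10 K)); exact: ler01.
  - move=> t _; exact: (@ex_derive _ _ _ _ _ _ _ (hD t)).
  - by rewrite in_itv /= ltrN10 ltr01.
  - by move=> t _; rewrite scale0r add0r.
have e := @derive_val _ _ _ _ _ _ _ h0.
rewrite (@derive_val _ _ _ _ _ _ _ (hD 0)) scale0r add0r in e.
have : sqnorm v = 0 by rewrite /sqnorm -e.
rewrite /v hgt sqnormZ => /eqP; rewrite mulf_eq0 => /orP [|/eqP //].
rewrite sqrf_eq0 invr_eq0 pnatr_eq0 => /eqP hM0.
by rewrite big1 ?sqnorm0 // => m _; have := ltn_ord m; move: (nat_of_ord m); rewrite hM0.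
Qed.

Local Notation Om := (Omega N C R).
Local Notation cPM := (#|{: {perm 'I_M}}|%:R : K).
Local Notation cPN := (#|{: {perm 'I_N}}|%:R : K).
Local Notation cFF := (#|{: {ffun 'I_M -> {perm 'I_N}}}|%:R : K).

Lemma sum_Omega (X : Om -> K) :
  \sum_(w : Om) X w = \sum_(p : {perm 'I_M}) \sum_(f : {ffun 'I_M -> {perm 'I_N}}) X (p, f).
Proof.
rewrite (pair_bigA _ (fun p f => X (p, f))) /=.
by apply: eq_bigr => -[p f] _.
Qed.

Lemma card_Om : #|{: Om}|%:R = cPM * cFF :> K.
Proof. by rewrite /Omega card_prod natrM. Qed.

Lemma cP_gt0 n : (0 : K) < #|{: {perm 'I_n}}|%:R.
Proof. by rewrite ltr0n; apply/card_gt0P; exists 1%g. Qed.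

Definition Gs := \sum_(m < M) sqnorm (gm m).

Lemma ES r : (r <= R)%N ->
  \sum_(p : {perm 'I_M}) sqnorm (Spre p r) <= cPM * (Gs / 2).
Proof.
move=> hr; have := perm_bound_vec gm (fun i : 'I_M => (i < r * C)%N).
by rewrite gsum0 addr0.
Qed.

Definition Ym (m : 'I_M) := (\sum_(k < N) sqnorm (grad (F m k) xs)) / 2 + N%:R ^+ 2 * sqnorm (gm m).

Lemma ET (j : nat) m0 :
  \sum_(f : {ffun 'I_M -> {perm 'I_N}})
     sqnorm (\sum_(k < N | (k < j)%N) grad (F m0 (f m0 k)) xs) <= cFF * Ym m0.
Proof.
have h := ffun_marg (fun p : {perm 'I_N} => sqnorm (\sum_(k < N | (k < j)%N) grad (F m0 (p k)) xs)) m0.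
have hb := perm_bound_vec (fun k => grad (F m0 k) xs) (fun k : 'I_N => (k < j)%N).
rewrite sumF sqnormZ in hb.
rewrite -(ler_pM2l (cP_gt0 N)) h mulrCA.
by apply: ler_wpM2l => //; rewrite ler0n.
Qed.

End Main.

Section Main2.
Variables (K : realType) (d N C R : nat).
Local Notation vec := 'rV[K]_d.
Local Notation M := (C * R)%N.
Variables (F : 'I_M -> 'I_N -> vec -> K) (xs : vec) (gamma eta L : K).
Hypothesis hsmooth : forall m j, Lsmooth L (F m j).
Hypothesis hmin : forall y, ftot F xs <= ftot F y.
Hypotheses (hgamma : 0 < gamma) (heta : 0 < eta).
Local Notation Om := (Omega N C R).
Local Notation cPM := (#|{: {perm 'I_M}}|%:R : K).
Local Notation cPN := (#|{: {perm 'I_N}}|%:R : K).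
Local Notation cFF := (#|{: {ffun 'I_M -> {perm 'I_N}}}|%:R : K).

Local Notation g := (gm F xs).
Local Notation S := (Spre F xs).

Lemma DS_bound (r : 'I_R) (s : 'I_C) (j : 'I_N) :
  sigmaDS F xs gamma r s j <=
       L * ((C * R)%:R * (N ^ 2)%:R / (2 * (C ^ 2)%:R) + 2 * (N ^ 2)%:R)
         * sigt2 F xs
       + L * N%:R / 2 * sigs2 F xs.
Proof.
have hC : (0 < C)%N by apply: leq_ltn_trans (ltn_ord s).
have hN : (0 < N)%N by apply: leq_ltn_trans (ltn_ord j).
have hM : (0 < M)%N by apply: leq_ltn_trans (ltn_ord (slot r s)).
set i0 := slot r s.
set c1 := gamma * N%:R / C%:R.
pose X (w : Om) := let m := cohort w r s in
     bregman (F m (dperm w m j)) (x_inner F xs gamma w (x_round F xs gamma w r) m j) xs.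
pose T (w : Om) := \sum_(k < N | (k < j)%N) grad (F (w.1 i0) (w.2 (w.1 i0) k)) xs.
have hX w : X w <= L / 2 * sqnorm (- (c1 *: S w.1 r) + - (gamma *: T w)).
  apply: le_trans (bregman_le _ _ (hsmooth _ _)) _.
  rewrite (x_round_eq xs gamma hsmooth w hC (ltnW (ltn_ord r))) /x_inner.
  rewrite le_eqVlt; apply/orP; left; apply/eqP; congr (_ * sqnorm _).
  by rewrite addrC !addrA addNr add0r.
set G := Gs F xs.
set A := \sum_(m < M) \sum_(k < N) sqnorm (grad (F m k) xs).
have e1 : sigt2 F xs = M%:R^-1 * G by [].
have e2 : sigs2 F xs = (M%:R * N%:R)^-1 * A by rewrite /sigs2 natrM.
have hG : 0 <= G by apply: sumr_ge0 => m _; exact: sqnorm_ge0.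
have hA : 0 <= A by apply: sumr_ge0 => m _; apply: sumr_ge0 => k _; exact: sqnorm_ge0.
have hMr : (0 : K) < M%:R by rewrite ltr0n.
have hNr : (0 : K) < N%:R by rewrite ltr0n.
have hCr : (0 : K) < C%:R by rewrite ltr0n.
have hg2 : 0 < gamma ^+ 2 by rewrite exprn_gt0.
have hcP : 0 < cPM := cP_gt0 K M.
have hcF : (0 : K) < cFF by rewrite ltr0n; apply/card_gt0P; exists [ffun=> 1%g].
have eD : sigmaDS F xs gamma r s j = (gamma ^+ 2)^-1 * ((cPM * cFF)^-1 * \sum_w X w).
  by rewrite /sigmaDS /Eunif card_Om.
rewrite eD e1 e2 !natrX.
case: (L_or_d0 xs hsmooth hM hN) => [hL|hd0]; last first.
  have hG0 : G = 0 by rewrite /G /Gs big1 // => m _; exact: hd0.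
  have hA0 : A = 0 by rewrite /A big1 // => m _; rewrite big1 // => k _; exact: hd0.
  rewrite hG0 hA0 !mulr0 addr0.
  apply: mulr_ge0_le0; first by rewrite invr_ge0 ltW.
  apply: mulr_ge0_le0; first by rewrite invr_ge0 mulr_ge0 // ltW.
  by apply: sumr_le0 => w _; apply: le_trans (hX w) _; rewrite hd0 mulr0.
have hX2 w : X w <= L * c1 ^+ 2 * sqnorm (S w.1 r) + L * gamma ^+ 2 * sqnorm (T w).
  apply: le_trans (hX w) _.
  have hL2 : 0 <= L / 2 by apply: divr_ge0.
  apply: le_trans (ler_wpM2l hL2 (sqnormD_le _ _)) _.
  rewrite !sqnormN !sqnormZ.
  by rewrite le_eqVlt; apply/orP; left; apply/eqP; field.
set P1 := \sum_(p : {perm 'I_M}) sqnorm (S p r).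
set P2 := \sum_(p : {perm 'I_M}) Ym F xs (p i0).
have hSX : \sum_w X w <= L * c1 ^+ 2 * (cFF * P1) + L * gamma ^+ 2 * (cFF * P2).
  apply: le_trans (ler_sum _ (fun w _ => hX2 w)) _.
  rewrite big_split /= -!mulr_sumr.
  have hL1 : 0 <= L * c1 ^+ 2 by apply: mulr_ge0 => //; exact: sqr_ge0.
  have hL2 : 0 <= L * gamma ^+ 2 by apply: mulr_ge0 => //; exact: sqr_ge0.
  apply: lerD; [apply: (ler_wpM2l hL1) | apply: (ler_wpM2l hL2)].
    rewrite sum_Omega /P1 mulr_sumr le_eqVlt; apply/orP; left; apply/eqP; apply: eq_bigr => p _.
    by rewrite /= sumr_const mulr_natl.
  rewrite sum_Omega /P2 mulr_sumr; apply: ler_sum => p _.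
  exact: (ET xs hsmooth j (p i0)).
have hP1 : P1 <= cPM * (G / 2) by exact: (ES hsmooth hmin (ltnW (ltn_ord r))).
have hP2 : M%:R * P2 = cPM * (A / 2 + N%:R ^+ 2 * G).
  rewrite /P2 (perm_unif (Ym F xs) i0); congr (_ * _).
  rewrite /Ym big_split /= -mulr_suml -mulr_sumr //.
have k : (gamma ^+ 2)^-1 * ((cPM * cFF)^-1 *
      (L * c1 ^+ 2 * (cFF * P1) + L * gamma ^+ 2 * (cFF * P2))) =
    L * (N%:R ^+ 2 / C%:R ^+ 2) * (P1 / cPM) + L * (P2 / cPM).
  rewrite /c1; field.
  by rewrite !gt_eqF.
have h1 : (gamma ^+ 2)^-1 * ((cPM * cFF)^-1 * \sum_w X w) <=
    L * (N%:R ^+ 2 / C%:R ^+ 2) * (P1 / cPM) + L * (P2 / cPM).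
  rewrite -k; apply: ler_wpM2l; first by rewrite invr_ge0 ltW.
  apply: ler_wpM2l => //; by rewrite invr_ge0 ltW // mulr_gt0.
have h2 : P1 / cPM <= G / 2 by rewrite ler_pdivrMr // mulrC.
have h3 : P2 / cPM = (A / 2 + N%:R ^+ 2 * G) / M%:R.
  apply: (mulfI (lt0r_neq0 hMr)); rewrite [RHS]mulrC divfK ?gt_eqF //.
  by rewrite mulrA hP2 mulrAC divff ?gt_eqF // mul1r.
have h4 : L * (N%:R ^+ 2 / C%:R ^+ 2) * (P1 / cPM) <= L * (N%:R ^+ 2 / C%:R ^+ 2) * (G / 2).
  apply: ler_wpM2l h2; apply: mulr_ge0 => //; apply: divr_ge0; exact: sqr_ge0.
have h5 : 0 <= L * N%:R ^+ 2 * G / M%:R.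
  apply: divr_ge0; [apply: mulr_ge0; [apply: mulr_ge0 => //; exact: sqr_ge0 | by []] | exact: ltW].
have e3 : L * (M%:R * N%:R ^+ 2 / (2 * C%:R ^+ 2) + 2 * N%:R ^+ 2) * (M%:R^-1 * G) +
    L * N%:R / 2 * ((M%:R * N%:R)^-1 * A) =
    L * (N%:R ^+ 2 / C%:R ^+ 2) * (G / 2) + L * ((A / 2 + N%:R ^+ 2 * G) / M%:R) +
    L * N%:R ^+ 2 * G / M%:R.
  field; rewrite !pnatr_eq0 -!lt0n hC hN !andbT; exact: (leq_ltn_trans (leq0n _) (ltn_ord r)).
rewrite e3; rewrite h3 in h1; lra.
Qed.

Lemma breg_fm (m : 'I_M) (x : vec) :
  bregman (fm F m) x xs = N%:R^-1 * \sum_(j < N) bregman (F m j) x xs.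
Proof.
rewrite /fm bregman_scale_sum // => j.
by have [h _] := hsmooth m j.
Qed.

Lemma CS_bound (m : 'I_M) (r : nat) : (r <= R)%N ->
  sigmaCS F xs eta m r <= L * (C * R)%:R / (2 * (C ^ 2)%:R) * sigt2 F xs.
Proof.
move=> hr.
have hM : (0 < M)%N by apply: leq_ltn_trans (ltn_ord m).
have hC : (0 < C)%N by move: hM; rewrite muln_gt0 => /andP [].
set G := Gs F xs.
have e1 : sigt2 F xs = M%:R^-1 * G by [].
have hG : 0 <= G by apply: sumr_ge0 => i _; exact: sqnorm_ge0.
have hMr : (0 : K) < M%:R by rewrite ltr0n.
have hCr : (0 : K) < C%:R by rewrite ltr0n.
have he2 : 0 < eta ^+ 2 by rewrite exprn_gt0.
have hcP : 0 < cPM := cP_gt0 K M.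
have hcF : (0 : K) < cFF by rewrite ltr0n; apply/card_gt0P; exists [ffun=> 1%g].
pose X (w : Om) := bregman (fm F m) (y_round F xs eta w r) xs.
have eD : sigmaCS F xs eta m r = (eta ^+ 2)^-1 * ((cPM * cFF)^-1 * \sum_w X w).
  by rewrite /sigmaCS /Eunif card_Om.
rewrite eD e1 natrX.
have hX0 : (forall w, X w <= 0) -> (eta ^+ 2)^-1 * ((cPM * cFF)^-1 * \sum_w X w) <= 0.
  move=> h.
  apply: mulr_ge0_le0; first by rewrite invr_ge0 ltW.
  apply: mulr_ge0_le0; first by rewrite invr_ge0 mulr_ge0 // ltW.
  by apply: sumr_le0 => w _.
case: (posnP N) => [hN0|hN].
  have hG0 : G = 0.
    rewrite /G /Gs big1 // => i _; rewrite (gm_eq xs hsmooth) big1 ?scaler0 ?sqnorm0 // => k _.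
    by have := ltn_ord k; move: (nat_of_ord k); rewrite hN0.
  rewrite hG0 !mulr0; apply: hX0 => w.
  rewrite /X breg_fm big1 ?mulr0 // => k _.
  by exfalso; have := ltn_ord k; move: (nat_of_ord k); rewrite hN0.
have hXw w : X w <= L / 2 * sqnorm (y_round F xs eta w r - xs).
  rewrite /X breg_fm.
  have hNr : (0 : K) < N%:R by rewrite ltr0n.
  have hs : \sum_(j < N) bregman (F m j) (y_round F xs eta w r) xs <=
      \sum_(j < N) (L / 2 * sqnorm (y_round F xs eta w r - xs)).
    by apply: ler_sum => j _; exact: bregman_le.
  rewrite sumr_const card_ord in hs.
  apply: le_trans (ler_wpM2l _ hs) _; first by rewrite invr_ge0 ltW.
  set v := L / 2 * _.
  by rewrite -(mulr_natl v N) mulrA mulVf ?mul1r // gt_eqF.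
have hyr w : y_round F xs eta w r - xs = - ((eta / C%:R) *: S w.1 r).
  by rewrite (y_round_eq F xs eta w hr) addrAC subrr add0r.
case: (L_or_d0 xs hsmooth hM hN) => [hL|hd0]; last first.
  have hG0 : G = 0 by rewrite /G /Gs big1 // => i _; exact: hd0.
  rewrite hG0 !mulr0; apply: hX0 => w.
  by apply: le_trans (hXw w) _; rewrite hd0 mulr0.
set P1 := \sum_(p : {perm 'I_M}) sqnorm (S p r).
have hSX : \sum_w X w <= L / 2 * (eta / C%:R) ^+ 2 * (cFF * P1).
  apply: le_trans (ler_sum _ (fun w _ => hXw w)) _.
  under eq_bigr => w _ do rewrite hyr sqnormN sqnormZ mulrA.
  rewrite -mulr_sumr; apply: ler_wpM2l.
    by apply: mulr_ge0; [apply: divr_ge0 | exact: sqr_ge0].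
  rewrite sum_Omega /P1 mulr_sumr le_eqVlt; apply/orP; left; apply/eqP; apply: eq_bigr => p _.
  by rewrite /= sumr_const mulr_natl.
have hP1 : P1 <= cPM * (G / 2) by exact: (ES hsmooth hmin hr).
have k : (eta ^+ 2)^-1 * ((cPM * cFF)^-1 * (L / 2 * (eta / C%:R) ^+ 2 * (cFF * P1))) =
    L / (2 * C%:R ^+ 2) * (P1 / cPM).
  field; by rewrite !gt_eqF.
have h1 : (eta ^+ 2)^-1 * ((cPM * cFF)^-1 * \sum_w X w) <= L / (2 * C%:R ^+ 2) * (P1 / cPM).
  rewrite -k; apply: ler_wpM2l; first by rewrite invr_ge0 ltW.
  apply: ler_wpM2l => //; by rewrite invr_ge0 ltW // mulr_gt0.
have h2 : P1 / cPM <= G / 2 by rewrite ler_pdivrMr // mulrC.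
have hc : 0 <= L / (2 * C%:R ^+ 2) by apply: divr_ge0 => //; apply: mulr_ge0 => //; exact: sqr_ge0.
have h4 := ler_wpM2l hc h2.
have e3 : L * M%:R / (2 * C%:R ^+ 2) * (M%:R^-1 * G) = L / (2 * C%:R ^+ 2) * G.
  by field; rewrite !pnatr_eq0 -!lt0n; move: hM; rewrite muln_gt0.
have h5 : 0 <= L / (2 * C%:R ^+ 2) * G by apply: mulr_ge0.
rewrite e3; lra.
Qed.
End Main2.

Unset Implicit Arguments.
Local Close Scope classical_set_scope.
Local Open Scope ring_scope.

Theorem lemma4 (K : realType) (d N C R : nat)
  (F : 'I_(C * R) -> 'I_N -> 'rV[K]_d -> K) (L gamma eta : K) (xs : 'rV[K]_d)
  (hgamma : 0 < gamma) (heta : 0 < eta)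
  (hsmooth : forall m j, Lsmooth L (F m j))
  (hmin : forall y, ftot F xs <= ftot F y) :
  (forall (r : 'I_R) (s : 'I_C) (j : 'I_N),
     sigmaDS F xs gamma r s j <=
       L * ((C * R)%:R * (N ^ 2)%:R / (2 * (C ^ 2)%:R) + 2 * (N ^ 2)%:R)
         * sigt2 F xs
       + L * N%:R / 2 * sigs2 F xs) /\
  (forall (m : 'I_(C * R)) (r : nat), (r <= R)%N ->
     sigmaCS F xs eta m r <= L * (C * R)%:R / (2 * (C ^ 2)%:R) * sigt2 F xs).
Proof.
split.
- move=> r s j; exact: (DS_bound hsmooth hmin hgamma r s j).
- move=> m r hr; exact: (CS_bound hsmooth hmin heta m hr).
Qed.
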